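(* Let $\lambda,a\in\mathbb{R}^n$ with $\|\lambda\|=\|a\|=1$ and $d\in\mathbb{R}^m$ with $\|d\|\le1$. For $y\in\mathbb{R}^m$ let $\phi_\lambda(y)=\max_x\{\lambda^\mathsf{T} x:\|x\|\le\|y\|,\ a^\mathsf{T} x+d^\mathsf{T} y\le0\}$. Then $$\phi_\lambda(y)=\begin{cases}\|y\|, & \text{if } \lambda^\mathsf{T} a\,\|y\|+d^\mathsf{T} y\le0,\\ \sqrt{(\|y\|^2-(d^\mathsf{T} y)^2)(1-(\lambda^\mathsf{T} a)^2)}-d^\mathsf{T} y\,\lambda^\mathsf{T} a, & \text{otherwise.}\end{cases}$$ Furthermore, $\phi_\lambda$ is sublinear (convex and positively homogeneous), and: if $\|d\|=1$ and $m>1$, then $\phi_\lambda$ is differentiable on $\mathbb{R}^m\setminus d\mathbb{R}_+$; otherwise $\phi_\lambda$ is differentiable on $\mathbb{R}^m\setminus\{0\}$.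
   Context: $\|\cdot\|$ is the Euclidean norm; $d\mathbb{R}_+=\{td:t\ge0\}$. *)

(* Defs.v *)
From HB Require Import structures.
From mathcomp Require Import all_boot all_order all_algebra.
From mathcomp Require Import all_classical all_reals all_analysis.
Set Implicit Arguments. Unset Strict Implicit. Unset Printing Implicit Defensive.
Import Order.TTheory GRing.Theory Num.Theory.
Import numFieldNormedType.Exports.
Local Open Scope ring_scope.
Local Open Scope classical_set_scope.

Definition dotp (R : realType) (k : nat) (u v : 'rV[R]_k) : R :=
  \sum_(i < k) u 0 i * v 0 i.

Definition enorm (R : realType) (k : nat) (u : 'rV[R]_k) : R :=
  Num.sqrt (dotp u u).

Definition feasible (R : realType) (n m : nat) (a : 'rV[R]_n) (d y : 'rV[R]_m)
  (x : 'rV[R]_n) : Prop :=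
  enorm x <= enorm y /\ dotp a x + dotp d y <= 0.

(* phi_lambda(y) = max_x { lambda^T x : x feasible }, defined as the supremum;
   the theorem additionally asserts that the supremum is attained. *)
Definition phi (R : realType) (n m : nat) (lam a : 'rV[R]_n) (d : 'rV[R]_m)
  (y : 'rV[R]_m) : R :=
  sup [set dotp lam x | x in feasible a d y].

(* Main.v *)
Require Import Defs.
From HB Require Import structures.
From mathcomp Require Import all_boot all_order all_algebra.
From mathcomp Require Import all_classical all_reals all_analysis.
Import Order.TTheory GRing.Theory Num.Theory.
Import numFieldNormedType.Exports.
Local Open Scope ring_scope.
Local Open Scope classical_set_scope.
From mathcomp Require Import ring lra.
Set Implicit Arguments. Unset Strict Implicit.
Section Real.
Variable R : realType.
Lemma sq_le (x y : R) : 0 <= y -> x^+2 <= y^+2 -> x <= y.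
Proof.
move=> hy hxy; have [x0|x0] := lerP x 0; first by lra.
nra.
Qed.
Lemma L1 (al be t Rr C : R) : al^+2 + be^+2 = 1 -> 0 <= be -> 0 <= C -> C^+2 = Rr^+2 - t^+2 ->
  0 <= Rr -> t ^+2 <= Rr^+2 -> t <= al * Rr -> be * t <= al * C.
Proof.
move=> hab hb hC hC2 hR ht htr.
have [al0|al0] := lerP 0 al.
  have [t0|t0] := lerP t 0.
    by nra.
  apply: sq_le; first by nra.
  nra.
have hh : al * Rr <= 0 by nra.
have h0 : (al * Rr)^+2 <= t^+2 by nra.
have h1 : (al * C)^+2 <= (be * t)^+2.
  rewrite !exprMn hC2; have -> : be^+2 = 1 - al^+2 by lra.
  nra.
have h2 : al * C <= 0 by nra.
have h3 : be * t <= 0 by nra.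
nra.
Qed.
Lemma GL (al be s sg Rr A B : R) : al^+2 + be^+2 = 1 -> 0 <= be -> 0 <= Rr ->
  s <= sg -> s^+2 <= Rr^+2 -> sg^+2 <= Rr^+2 -> sg <= al * Rr ->
  0 <= A -> A^+2 = Rr^+2 - s^+2 -> 0 <= B -> B^+2 = Rr^+2 - sg^+2 ->
  al * s + be * A <= al * sg + be * B.
Proof.
move=> hab hb hR hs hs2 hsg2 hsg hA hA2 hB hB2.
have h1 : be * s <= al * A := L1 hab hb hA hA2 hR hs2 (le_trans hs hsg).
have h2 : be * sg <= al * B := L1 hab hb hB hB2 hR hsg2 hsg.
have E : (A+B)*(be*(A-B) - al*(sg-s)) = (sg - s)*(be*(sg+s) - al*(A+B)).
  have -> : (A+B)*(be*(A-B) - al*(sg-s)) = be*A^+2 - be*B^+2 - al*(sg-s)*(A+B) by ring.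
  rewrite hA2 hB2; ring.
have P : (sg - s)*(be*(sg+s) - al*(A+B)) <= 0 by nra.
have [AB0|AB0] := lerP (A + B) 0.
  have A0 : A = 0 by lra.
  have B0 : B = 0 by lra.
  rewrite A0 B0 !mulr0 !addr0.
  rewrite A0 expr0n /= in hA2; rewrite B0 expr0n /= in hB2.
  have [a0|a0] := lerP 0 al; first by nra.
  have hh : al * Rr <= 0 by nra.
  have sg0 : sg <= 0 by lra.
  have e1 : (sg + Rr) * (sg - Rr) = 0 by nra.
  have e2 : (s + Rr) * (s - Rr) = 0 by nra.
  have sgR : sg = - Rr.
    move/eqP: e1; rewrite mulf_eq0 => /orP[/eqP|/eqP]; lra.
  have sR : s = - Rr.
    move/eqP: e2; rewrite mulf_eq0 => /orP[/eqP|/eqP]; lra.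
  by rewrite sgR sR.
have : be*(A-B) - al*(sg-s) <= 0 by rewrite -(pmulr_rle0 _ AB0) E.
lra.
Qed.
Lemma aux1 (r x : R) : r + x <= 0 -> - r <= x -> r = - x.
Proof. lra. Qed.
Lemma aux2 (de r al : R) : de ^+ 2 = r ^+ 2 -> 0 <= r -> al ^+ 2 <= 1 -> 0 < al * r + de -> 0 <= de.
Proof.
move=> h r0 a2 hp; rewrite leNgt; apply/negP => dn.
have al1 : al <= 1 by nra.
have e : (de - r) * (de + r) = 0 by rewrite -subr_sqr h subrr.
have : de + r = 0.
  move/eqP: e; rewrite mulf_eq0 => /orP[/eqP e2|/eqP //]; lra.
move=> e3.
have : al * r + de = (al - 1) * r by lra.
move=> e4; rewrite e4 in hp; nra.
Qed.
End Real.
Section D.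
Variable R : realType.
Variable k : nat.
Implicit Types u v w : 'rV[R]_k.
Lemma dotpC u v : dotp u v = dotp v u.
Proof. by apply: eq_bigr => i _; rewrite mulrC. Qed.
Lemma dotpDl u v w : dotp (u + v) w = dotp u w + dotp v w.
Proof. by rewrite /dotp -big_split; apply: eq_bigr => i _; rewrite mxE mulrDl. Qed.
Lemma dotpDr u v w : dotp w (u + v) = dotp w u + dotp w v.
Proof. by rewrite dotpC dotpDl !(dotpC w). Qed.
Lemma dotpZl (t : R) u v : dotp (t *: u) v = t * dotp u v.
Proof. by rewrite /dotp mulr_sumr; apply: eq_bigr => i _; rewrite mxE mulrA. Qed.
Lemma dotpZr (t : R) u v : dotp u (t *: v) = t * dotp u v.
Proof. by rewrite dotpC dotpZl dotpC. Qed.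
Lemma dotpNl u v : dotp (- u) v = - dotp u v.
Proof. by rewrite -scaleN1r dotpZl mulN1r. Qed.
Lemma dotpNr u v : dotp u (- v) = - dotp u v.
Proof. by rewrite dotpC dotpNl dotpC. Qed.
Lemma dotpBl u v w : dotp (u - v) w = dotp u w - dotp v w.
Proof. by rewrite dotpDl dotpNl. Qed.
Lemma dotpBr u v w : dotp w (u - v) = dotp w u - dotp w v.
Proof. by rewrite dotpDr dotpNr. Qed.
Lemma dotp0l v : dotp 0 v = 0.
Proof. by rewrite /dotp big1 // => i _; rewrite mxE mul0r. Qed.
Lemma dotp0r v : dotp v 0 = 0.
Proof. by rewrite dotpC dotp0l. Qed.
Lemma dotp_ge0 u : 0 <= dotp u u.
Proof. by rewrite /dotp sumr_ge0 // => i _; rewrite -expr2 sqr_ge0. Qed.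

Lemma dotp_eq0 u : dotp u u = 0 -> u = 0.
Proof.
move=> h; apply/rowP => i; rewrite mxE.
have H := psumr_eq0P (fun j (_ : true) => sqr_ge0 (u 0 j)).
have E : (\sum_(j < k) u 0 j ^+ 2 = dotp u u).
  by apply: eq_bigr => j _; rewrite expr2.
rewrite h in E; move: E.
move/H => /(_ i isT) /eqP; rewrite sqrf_eq0 => /eqP //.
Qed.

Lemma enorm_sq u : enorm u ^+ 2 = dotp u u.
Proof. by rewrite /enorm sqr_sqrtr // dotp_ge0. Qed.

Lemma enorm_ge0 u : 0 <= enorm u.
Proof. exact: sqrtr_ge0. Qed.

Lemma quad_disc (A B C : R) : 0 <= C -> (forall t, 0 <= A - 2*t*B + t^+2 * C) -> B^+2 <= A*C.
Proof.
move=> C0 H.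
have [Cp|C0'] := ltrP 0 C.
  have := H (B / C).
  have -> : A - 2 * (B / C) * B + (B / C) ^+ 2 * C = (A * C - B^+2) / C by field; lra.
  move=> h; have : 0 <= (A*C - B^+2)/C * C by rewrite mulr_ge0 // ltW.
  rewrite divfK ?gt_eqF //; lra.
have C00 : C = 0 by lra.
have [B0|B0] := eqVneq B 0; first by rewrite B0 C00; lra.
have := H ((A + 1) / (2 * B)); rewrite C00 mulr0 addr0.
have -> : 2 * ((A + 1) / (2 * B)) * B = A + 1 by field; rewrite B0.
lra.
Qed.

Lemma CS2 u v (c1 c2 : R) :
  (dotp u v + c1 * c2)^+2 <= (dotp u u + c1^+2) * (dotp v v + c2^+2).
Proof.
apply: quad_disc; first by have := dotp_ge0 v; nra.
move=> t.
have := dotp_ge0 (u - t *: v).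
rewrite dotpBl !dotpBr !dotpZl !dotpZr (dotpC v u) => h.
have := sqr_ge0 (c1 - t * c2).
nra.
Qed.

Lemma CS u v : dotp u v ^+ 2 <= dotp u u * dotp v v.
Proof. by have := CS2 u v 0 0; rewrite mulr0 !addr0 expr0n /= !addr0. Qed.

Lemma CSn u v : dotp u v <= enorm u * enorm v.
Proof.
apply: sq_le; first by rewrite mulr_ge0 // enorm_ge0.
by rewrite exprMn !enorm_sq CS.
Qed.
End D.

Section Diff.
Variable R : realType.
Variable k : nat.

Lemma diff_dot (v y : 'rV[R]_k) : differentiable (fun z => dotp v z) y.
Proof.
have -> : (fun z => dotp v z) = \sum_(i < k) (cst (v 0 i) * (fun z : 'rV[R]_k => z 0 i)).
  by rewrite fct_sumE; apply/funext => z; rewrite /dotp.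
apply: differentiable_sum => i.
apply: differentiableM; first exact: differentiable_cst.
exact: differentiable_coord.
Qed.

Lemma diff_dotself (y : 'rV[R]_k) : differentiable (fun z => dotp z z) y.
Proof.
have -> : (fun z => dotp z z) = \sum_(i < k) ((fun z : 'rV[R]_k => z 0 i) * (fun z : 'rV[R]_k => z 0 i)).
  by rewrite fct_sumE; apply/funext => z; rewrite /dotp.
apply: differentiable_sum => i.
by apply: differentiableM; exact: differentiable_coord.
Qed.

Lemma diff_sqrt_comp (f : 'rV[R]_k -> R) y : differentiable f y -> 0 < f y ->
  differentiable (fun z => Num.sqrt (f z)) y.
Proof.
move=> df fy.
have : differentiable (@Num.sqrt R) (f y).
  apply/derivable1_diffP.
  have H := is_derive1_sqrt fy; exact: ex_derive.
move=> ds; exact: (differentiable_comp df ds).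
Qed.

Lemma diff_enorm (y : 'rV[R]_k) : y != 0 -> differentiable (@enorm R k) y.
Proof.
move=> y0; apply: (diff_sqrt_comp (diff_dotself y)).
rewrite lt_neqAle dotp_ge0 andbT eq_sym; apply/eqP => /dotp_eq0 h.
by rewrite h eqxx in y0.
Qed.
End Diff.

Section Anal.
Variable R : realType.
Lemma diff_min0_ge (V : normedModType R) (h : V -> R) x : differentiable h x -> h x = 0 ->
  (\forall y \near x, 0 <= h y) -> forall v, 0 <= 'd h x v.
Proof.
move=> dh hx0 hpos v.
rewrite leNgt; apply/negP => Lneg.
have Hk := diff_locally dh; rewrite hx0 in Hk.
have /eqaddoP Lk := Hk.
set eps := - 'd h x v / (2 * (`|v| + 1)).
have eps0 : 0 < eps by rewrite /eps divr_gt0 // ?oppr_gt0 // mulr_gt0 // ltr_pwDr.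
have H1 := Lk eps eps0.
rewrite (near_shift 0 x) /= in hpos.
have H2 : \forall z \near (0:V), `|(h \o shift x - (cst 0 + 'd h x)) z| <= eps * `|z| /\ 0 <= h (z + (x - 0)).
  by move: H1 hpos; apply: filterS2 => z A B.
have /nbhs_normP [e /= e0 He] := near0Z v H2.
have /He [/= A B] : ball_ (fun z : R => `|z|) 0 e (e / 2).
  by rewrite /ball_ /= sub0r normrN gtr0_norm ?divr_gt0 // ltr_pdivrMr // ltr_pMr // ltr1n.
rewrite subr0 in B.
set t := e / 2 in A B.
have t0 : 0 < t by rewrite /t divr_gt0.
move: A; rewrite !fctE /= add0r linearZ /= normrZ gtr0_norm //.
set hv := h _ in B *; clear H1 H2 He Lk Hk; set Lv := 'd h x v in Lneg eps eps0 *.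
set nv := `|v|.
have nv0 : 0 <= nv by rewrite /nv normr_ge0.
have epsnv : eps * nv <= - Lv / 2.
  rewrite /eps mulrAC ler_pdivrMr ?mulr_gt0 ?ltr_pwDr //.
  rewrite -/nv; have -> : - Lv / 2 * (2 * (nv + 1)) = - Lv * (nv + 1) by field. 
  nra.

move/ler_normlP => [_ C].
have C' : hv - t * Lv <= eps * (t * nv) by exact: C.
have : t * (eps * nv) <= t * (- Lv / 2) by rewrite ler_pM2l.
nra.
Qed.
Lemma diff_small (V : normedModType R) (e k : V -> R) x :
  differentiable k x -> 'd k x = 0 :> (V -> R) -> k x = 0 -> e x = 0 ->
  (\forall y \near x, `|e y| <= `|k y|) -> differentiable e x.
Proof.
move=> dk dk0 kx0 ex0 hek.
have Hk := diff_locally dk; rewrite kx0 dk0 in Hk.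
have /eqaddoP Lk := Hk.
have E : e \o shift x = cst (e x) + \0 +o_ 0 id.
  apply/eqaddoP => eps eps0.
  have := Lk eps eps0.
  rewrite (near_shift 0 x) /= in hek.
  move: hek; apply: filterS2 => h /= H1 H2.
  rewrite subr0 in H1.
  have -> : (e \o +%R^~ x - (cst (e x) + \0)) h = e (h + x).
    by rewrite !fctE ex0 add0r subr0.
  have E3 : (k \o +%R^~ x - (cst 0 + 0)) h = k (h + x).
    by rewrite !fctE /= add0r subr0.
  rewrite E3 in H2; exact: le_trans H1 H2.
have C0 : continuous (\0 : V -> R) by move=> z; exact: cst_continuous.
have E2 := diff_unique C0 E.
apply/diff_locallyP; rewrite E2; split => //.
Qed.

Lemma diff_min0 (V : normedModType R) (h : V -> R) x : differentiable h x -> h x = 0 ->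
  (\forall y \near x, 0 <= h y) -> 'd h x = 0 :> (V -> R).
Proof.
move=> dh hx0 hpos; apply/funext => v.
have A := diff_min0_ge dh hx0 hpos v.
have B := diff_min0_ge dh hx0 hpos (- v).
rewrite linearN /= in B.
rewrite /=; apply/eqP; rewrite eq_le A andbT.
by rewrite -oppr_ge0.
Qed.

Lemma diff_squeeze (V : normedModType R) (f l u : V -> R) x :
  differentiable l x -> differentiable u x -> l x = f x -> u x = f x ->
  (\forall y \near x, l y <= f y <= u y) -> differentiable f x.
Proof.
move=> dl du lx ux hn.
have dk : differentiable (u - l) x by apply: differentiableB.
have kx : (u - l) x = 0 by rewrite !fctE lx ux subrr.
have dk0 : 'd (u - l) x = 0 :> (V -> R).
  apply: diff_min0 => //.
  by move: hn; apply: filterS => y /andP[A B]; rewrite !fctE subr_ge0; exact: le_trans B.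
have de : differentiable (f - l) x.
  apply: (diff_small dk dk0 kx); first by rewrite !fctE lx subrr.
  move: hn; apply: filterS => y /andP[A B].
  rewrite !fctE !ger0_norm ?subr_ge0 //; last exact: le_trans B.
  by rewrite lerD2r.
have -> : f = l + (f - l) by apply/funext => y; rewrite !fctE addrC subrK.
exact: differentiableD.
Qed.

Lemma diff_near (V : normedModType R) (f g : V -> R) x :
  differentiable g x -> (\forall y \near x, f y = g y) -> differentiable f x.
Proof.
move=> dg hn; apply: (diff_squeeze dg dg).
- by have := nbhs_singleton hn => ->.
- by have := nbhs_singleton hn => ->.
by move: hn; apply: filterS => y ->; rewrite lexx.
Qed.
End Anal.

Lemma rV0_eq0 (R : realType) k (y : 'rV[R]_k) : k = 0%N -> y = 0.
Proof. by move=> k0; subst k; apply/rowP => -[]. Qed.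

Lemma Q1 (R : realType) k (d z : 'rV[R]_k) : k = 1%N -> dotp d d = 1 -> dotp d z ^+ 2 = dotp z z.
Proof.
move=> k1; subst k; rewrite /dotp !big_ord1 => h.
by rewrite exprMn expr2 h mul1r expr2.
Qed.

Section Main.
Variables (R : realType) (n m : nat) (lam a : 'rV[R]_n) (d : 'rV[R]_m).
Hypotheses (hl : enorm lam = 1) (ha : enorm a = 1) (hd : enorm d <= 1).

Definition al := dotp lam a.
Definition be := Num.sqrt (1 - al ^+ 2).
Definition rho2 := dotp d d.
Definition cc := Num.sqrt (1 - rho2).

Definition F (y : 'rV[R]_m) : R :=
  if al * enorm y + dotp d y <= 0 then enorm y
  else Num.sqrt ((enorm y ^+ 2 - (dotp d y) ^+ 2) * (1 - al ^+ 2)) - dotp d y * al.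

Lemma ll : dotp lam lam = 1.
Proof. by rewrite -enorm_sq hl expr1n. Qed.
Lemma aa : dotp a a = 1.
Proof. by rewrite -enorm_sq ha expr1n. Qed.
Lemma rho2_le1 : rho2 <= 1.
Proof. rewrite /rho2 -enorm_sq; have := hd; have := enorm_ge0 d; nra. Qed.
Lemma rho2_ge0 : 0 <= rho2.
Proof. exact: dotp_ge0. Qed.
Lemma al2 : al ^+ 2 <= 1.
Proof. by have := CS lam a; rewrite ll aa mulr1. Qed.
Lemma be2 : be ^+ 2 = 1 - al ^+ 2.
Proof. by rewrite /be sqr_sqrtr // subr_ge0 al2. Qed.
Lemma be_ge0 : 0 <= be.
Proof. exact: sqrtr_ge0. Qed.
Lemma cc2 : cc ^+ 2 = 1 - rho2.
Proof. by rewrite /cc sqr_sqrtr // subr_ge0 rho2_le1. Qed.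
Lemma cc_ge0 : 0 <= cc.
Proof. exact: sqrtr_ge0. Qed.
Lemma de2 y : dotp d y ^+ 2 <= dotp y y.
Proof.
have := CS d y; have := rho2_le1; have := dotp_ge0 y; rewrite -/rho2.
have := sqr_ge0 (dotp d y); nra.
Qed.
Lemma dlam_a : dotp a lam = al.
Proof. by rewrite dotpC. Qed.

Lemma F2 y : ~~ (al * enorm y + dotp d y <= 0) ->
  F y = be * Num.sqrt (enorm y ^+ 2 - dotp d y ^+ 2) - al * dotp d y.
Proof.
move=> h; rewrite /F (negbTE h) sqrtrM; last by rewrite enorm_sq subr_ge0 de2.
by rewrite mulrC [dotp d y * _]mulrC.
Qed.

Lemma P1 y x : feasible a d y x -> dotp lam x <= F y.
Proof.
move=> [hx hc].
have XY : dotp x x <= dotp y y.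
  rewrite -!enorm_sq; have := enorm_ge0 x; nra.
have [h|h] := boolP (al * enorm y + dotp d y <= 0).
  rewrite /F h; apply: le_trans (CSn lam x) _; rewrite hl mul1r; exact: hx.
set r := enorm y; set de := dotp d y; set s := dotp a x; set p := dotp lam x.
set w := lam - al *: a; set u := x - s *: a.
have wu : dotp w u = p - al * s.
  rewrite /w /u dotpBl !dotpBr !dotpZl !dotpZr aa -/s -/p -/al; ring.
have ww : dotp w w = 1 - al ^+ 2.
  rewrite /w dotpBl !dotpBr !dotpZl !dotpZr aa ll dlam_a; rewrite /al; ring.
have uu : dotp u u = dotp x x - s ^+ 2.
  rewrite /u dotpBl !dotpBr !dotpZl !dotpZr aa (dotpC x a) -/s; ring.
have sX : s ^+ 2 <= dotp x x by have := CS a x; rewrite aa mul1r.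
have r2 : r ^+ 2 = dotp y y by rewrite /r enorm_sq.
have r0 : 0 <= r by exact: enorm_ge0.
have h1 : p - al * s <= be * Num.sqrt (dotp x x - s ^+ 2).
  apply: sq_le; first by rewrite mulr_ge0 ?be_ge0 ?sqrtr_ge0.
  rewrite exprMn be2 sqr_sqrtr ?subr_ge0 //.
  by have := CS w u; rewrite wu ww uu.
have h2 : Num.sqrt (dotp x x - s ^+ 2) <= Num.sqrt (r ^+ 2 - s ^+ 2).
  by rewrite ler_sqrt ?r2 ?lerD2r // subr_ge0 -r2 (le_trans sX) // r2.
have de2' : de ^+ 2 <= r ^+ 2 by rewrite r2 de2.
have h3 := @GL _ al be s (- de) r (Num.sqrt (r ^+ 2 - s ^+ 2)) (Num.sqrt (r ^+ 2 - de ^+ 2)).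
rewrite F2 // -/r -/de.
have : al * s + be * Num.sqrt (r ^+ 2 - s ^+ 2) <= al * - de + be * Num.sqrt (r ^+ 2 - de ^+ 2).
  apply: h3.
  - by rewrite be2; ring.
  - exact: be_ge0.
  - exact: r0.
  - by move: hc; rewrite -/s -/de; lra.
  - by rewrite r2 (le_trans sX).
  - by rewrite sqrrN.
  - move: h; rewrite -ltNge -/r -/de => hh; rewrite -subr_ge0 opprK; exact: ltW.
  - exact: sqrtr_ge0.
  - by rewrite sqr_sqrtr // subr_ge0 r2 (le_trans sX).
  - exact: sqrtr_ge0.
  - by rewrite sqrrN sqr_sqrtr // subr_ge0.
have := be_ge0; nra.
Qed.

Lemma enorm_eq k (y : 'rV[R]_k) (t : R) : 0 <= t -> dotp y y = t ^+ 2 -> enorm y = t.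
Proof. by move=> t0 h; rewrite /enorm h sqrtr_sqr ger0_norm. Qed.

Lemma P2 y : exists x, feasible a d y x /\ dotp lam x = F y.
Proof.
set r := enorm y; set de := dotp d y.
have r0 : 0 <= r by exact: enorm_ge0.
have r2 : r ^+ 2 = dotp y y by rewrite /r enorm_sq.
have [h|h] := boolP (al * enorm y + dotp d y <= 0).
  exists (r *: lam); split; last by rewrite /F h dotpZr ll mulr1.
  split.
    by rewrite (enorm_eq (t:=r)) // dotpZl dotpZr ll mulr1 expr2.
  by rewrite dotpZr dlam_a mulrC.
set w := lam - al *: a.
set B := Num.sqrt (r ^+ 2 - de ^+ 2).
have B2 : B ^+ 2 = r ^+ 2 - de ^+ 2 by rewrite /B sqr_sqrtr // subr_ge0 r2 de2.
have aw : dotp a w = 0.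
  by rewrite /w dotpBr dotpZr aa dlam_a mulr1 subrr.
have ww : dotp w w = be ^+ 2.
  rewrite be2 /w dotpBl !dotpBr !dotpZl !dotpZr aa ll dlam_a; rewrite /al; ring.
have lw : dotp lam w = be ^+ 2.
  rewrite be2 /w dotpBr !dotpZr ll; rewrite /al; ring.
exists ((- de) *: a + (B / be) *: w).
have xx : dotp ((- de) *: a + (B / be) *: w) ((- de) *: a + (B / be) *: w)
          = de ^+ 2 + (B / be) ^+ 2 * be ^+ 2.
  rewrite !dotpDl !dotpDr !dotpZl !dotpZr aa aw (dotpC w a) aw ww; ring.
have lx : dotp lam ((- de) *: a + (B / be) *: w) = F y.
  rewrite F2 // dotpDr !dotpZr lw -/r -/de /al -/B.
  have [b0|b0] := eqVneq be 0.
    by rewrite b0 expr0n /= mulr0 addr0 mul0r sub0r mulNr mulrC.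
  rewrite -/al; field; exact: b0.
split => //; split.
  rewrite /enorm ler_sqrt ?dotp_ge0 // xx -r2.
  have [b0|b0] := eqVneq be 0.
    by rewrite b0 invr0 mulr0 expr0n /= mulr0 addr0 r2 de2.
  rewrite expr_div_n divfK ?expf_neq0 // B2; lra.
rewrite dotpDr !dotpZr aa aw mulr0 addr0 mulr1 -/de; lra.
Qed.

Lemma phiF y : phi lam a d y = F y.
Proof.
rewrite /phi; have [x [fx lx]] := P2 y.
have ub : ubound [set dotp lam x0 | x0 in feasible a d y] (F y).
  by move=> z [x' fx' <-]; exact: P1.
apply/eqP; rewrite eq_le; apply/andP; split.
  apply: ge_sup => //; by exists (dotp lam x), x.
rewrite -lx; apply: ub_le_sup; last by exists x.
by exists (F y).
Qed.

Lemma r_pos y : ~~ (al * enorm y + dotp d y <= 0) -> 0 < enorm y.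
Proof.
move=> h; rewrite lt_neqAle enorm_ge0 andbT; apply/eqP => r0.
have hde := de2 y; rewrite -enorm_sq -r0 expr0n /= in hde.
have : dotp d y = 0 by have := sqr_ge0 (dotp d y); nra.
by move=> e0; move: h; rewrite -r0 mulr0 add0r e0 lexx.
Qed.

Lemma K1 (g : 'rV[R]_m) (ga : R) y : dotp g g + ga ^+ 2 = 1 ->
  al + dotp d g + cc * ga <= 0 -> dotp g y <= F y.
Proof.
move=> hg hk.
have gg1 : dotp g g <= 1 by have := sqr_ge0 ga; lra.
have [h|h] := boolP (al * enorm y + dotp d y <= 0).
  rewrite /F h; apply: le_trans (CSn g y) _.
  have : enorm g <= 1 by rewrite /enorm -sqrtr1 ler_sqrt.
  have := enorm_ge0 g; have := enorm_ge0 y; nra.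
have rp := r_pos h.
rewrite F2 //.
set r := enorm y; set de := dotp d y.
have r2 : r ^+ 2 = dotp y y by rewrite /r enorm_sq.
set k := dotp d g + cc * ga.
have kk : k ^+ 2 <= 1.
  have := CS2 d g cc ga; rewrite cc2 hg -/rho2 -/k; lra.
set X := dotp g y - k * de.
have CS3 := CS2 (g - k *: d) (y - de *: d) (ga - k * cc) (- (de * cc)).
have E1 : dotp (g - k *: d) (y - de *: d) + (ga - k * cc) * - (de * cc) = X.
  have -> : dotp (g - k *: d) (y - de *: d) + (ga - k * cc) * - (de * cc)
     = X + k * de * (rho2 + cc ^+ 2 - 1).
    rewrite dotpBl !dotpBr !dotpZl !dotpZr -/de -/rho2 /X (dotpC g d).
    rewrite /k; ring.
  rewrite cc2; ring.
have E2 : dotp (g - k *: d) (g - k *: d) + (ga - k * cc) ^+ 2 = 1 - k ^+ 2.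
  have -> : dotp (g - k *: d) (g - k *: d) + (ga - k * cc) ^+ 2
     = (dotp g g + ga ^+ 2) - 2 * k * (dotp d g + cc * ga) + k ^+ 2 * (rho2 + cc ^+ 2).
    rewrite dotpBl !dotpBr !dotpZl !dotpZr -/rho2 (dotpC g d); ring.
  rewrite cc2 hg -/k; ring.
have E3 : dotp (y - de *: d) (y - de *: d) + (- (de * cc)) ^+ 2 = r ^+ 2 - de ^+ 2.
  have -> : dotp (y - de *: d) (y - de *: d) + (- (de * cc)) ^+ 2
     = dotp y y - 2 * de * dotp d y + de ^+ 2 * (rho2 + cc ^+ 2).
    rewrite dotpBl !dotpBr !dotpZl !dotpZr -/rho2 (dotpC y d); ring.
  rewrite cc2 r2 -/de; ring.
rewrite E1 E2 E3 in CS3.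
set N := Num.sqrt (r ^+ 2 - de ^+ 2).
have N2 : N ^+ 2 = r ^+ 2 - de ^+ 2 by rewrite /N sqr_sqrtr // subr_ge0 r2 de2.
have N0 : 0 <= N by exact: sqrtr_ge0.
set A := Num.sqrt (1 - k ^+ 2).
have A2 : A ^+ 2 = 1 - k ^+ 2 by rewrite /A sqr_sqrtr // subr_ge0.
have A0 : 0 <= A by exact: sqrtr_ge0.
have hX : X <= A * N.
  by apply: sq_le; [rewrite mulr_ge0 | rewrite exprMn A2 N2].
have G := @GL _ (de / r) (N / r) k (- al) 1 A be.
have hG : de / r * k + N / r * A <= de / r * - al + N / r * be.
  apply: G.
  - rewrite !expr_div_n N2 -mulrDl; have : r ^+ 2 != 0 by rewrite expf_neq0 // gt_eqF.
    move=> ?; rewrite subrKC divff //.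
  - by rewrite divr_ge0 // ltW.
  - by [].
  - have hk2 : al + k <= 0 by rewrite /k addrA. 
    clear -hk2; lra.
  - by rewrite expr1n.
  - by rewrite sqrrN expr1n al2.
  - rewrite mulr1 ler_pdivlMr // mulNr; move: h; rewrite -ltNge => hh.
    by rewrite -subr_ge0 opprK addrC ltW.
  - exact: A0.
  - by rewrite expr1n.
  - exact: be_ge0.
  - by rewrite expr1n sqrrN be2.
have hG' : de * k + N * A <= de * - al + N * be.
  have rr : r != 0 by rewrite gt_eqF.
  have e1 : (de / r * k + N / r * A) * r = de * k + N * A by field.
  have e2 : (de / r * - al + N / r * be) * r = de * - al + N * be by field.
  by rewrite -e1 -e2 ler_pM2r.
have -> : dotp g y = k * de + X by rewrite /X; ring.
lra.
Qed.

Lemma K2 y : exists g : 'rV[R]_m, exists ga : R,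
  [/\ dotp g g + ga ^+ 2 = 1, al + dotp d g + cc * ga <= 0 & dotp g y = F y].
Proof.
set r := enorm y; set de := dotp d y.
have r0 : 0 <= r by exact: enorm_ge0.
have r2 : r ^+ 2 = dotp y y by rewrite /r enorm_sq.
have deY : de ^+ 2 <= r ^+ 2 by rewrite r2 de2.
have al1 : al <= 1 by have := al2; have := sqr_ge0 al; nra.
have [h|h] := boolP (al * enorm y + dotp d y <= 0).
  rewrite /F h -/r.
  have [r00|rp] := eqVneq r 0.
    have de0 : de = 0 by move: deY; rewrite r00 expr0n /=; have := sqr_ge0 de; nra.
    exists (- d), (- cc); split.
    - by rewrite dotpNl dotpNr opprK sqrrN cc2 -/rho2; ring.
    - rewrite dotpNr -/rho2 mulrN -expr2 cc2; lra.
    - by rewrite dotpNl -/de de0 r00 oppr0.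
  have rpos : 0 < r by rewrite lt_neqAle eq_sym rp r0.
  exists (r^-1 *: y), 0; split.
  - rewrite dotpZl dotpZr -r2 expr0n /= addr0; field; exact: rp.
  - rewrite dotpZr mulr0 addr0 -/de.
    have : (al * r + de) / r <= 0 by rewrite pmulr_lle0 ?invr_gt0.
    by rewrite mulrDl mulfK // mulrC.
  - rewrite dotpZl -r2; field; exact: rp.
have rpos := r_pos h.
rewrite F2 // -/r -/de.
set N := Num.sqrt (r ^+ 2 - de ^+ 2).
have N2 : N ^+ 2 = r ^+ 2 - de ^+ 2 by rewrite /N sqr_sqrtr // subr_ge0.
have [N0|Nn0] := eqVneq N 0.
  have rh1 : rho2 = 1.
    have := CS d y; rewrite -/rho2 -/de -r2.
    move: N2; rewrite N0 expr0n /= => N2'.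
    have : de ^+ 2 = r ^+ 2 by lra.
    move=> ->; have := rho2_le1; have : 0 < r ^+ 2 by rewrite exprn_gt0.
    nra.
  have cc0 : cc = 0 by rewrite /cc rh1 subrr sqrtr0.
  exists ((- al) *: d), be; split.
  - by rewrite dotpZl dotpZr -/rho2 rh1 be2; ring.
  - by rewrite dotpZr -/rho2 rh1 cc0; lra.
  - by rewrite dotpZl -/de N0; ring.
exists ((be / N) *: (y - de *: d) - al *: d), (- cc * (be * de / N + al)); split.
- have -> : dotp ((be / N) *: (y - de *: d) - al *: d) ((be / N) *: (y - de *: d) - al *: d)
      + (- cc * (be * de / N + al)) ^+ 2
      = (be / N) ^+ 2 * (dotp y y - 2 * de ^+ 2 + de ^+ 2 * rho2)
        - 2 * (be / N) * al * (de - de * rho2) + al ^+ 2 * rho2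
        + cc ^+ 2 * (be * de / N + al) ^+ 2.
    rewrite !(dotpBl, dotpBr, dotpZl, dotpZr) -/rho2 (dotpC y d) -/de; ring.
  rewrite cc2 -r2 -[r ^+ 2](subrK (de ^+ 2)) -N2.
  have -> : (be / N) ^+ 2 * (N ^+ 2 + de ^+ 2 - 2 * de ^+ 2 + de ^+ 2 * rho2) -
     2 * (be / N) * al * (de - de * rho2) + al ^+ 2 * rho2 +
     (1 - rho2) * (be * de / N + al) ^+ 2 = be ^+ 2 + al ^+ 2.
    by field.
  by rewrite be2; ring.
- have -> : al + dotp d ((be / N) *: (y - de *: d) - al *: d) + cc * (- cc * (be * de / N + al))
      = (1 - rho2 - cc ^+ 2) * (be * de / N + al).
    rewrite !(dotpBl, dotpBr, dotpZl, dotpZr) -/rho2 -/de; field.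
    exact: Nn0.
  by rewrite cc2 subrr mul0r lexx.
- rewrite dotpBl !dotpZl dotpBl dotpZl -r2 -/de.
  have -> : be / N * (r ^+ 2 - de * de) = be / N * N ^+ 2 by rewrite N2 expr2.
  by field.
Qed.

Lemma F_convex y z t : 0 <= t -> t <= 1 ->
  F (t *: y + (1 - t) *: z) <= t * F y + (1 - t) * F z.
Proof.
move=> t0 t1; have [g [ga [h1 h2 <-]]] := K2 (t *: y + (1 - t) *: z).
rewrite dotpDr !dotpZr.
have A := K1 y h1 h2; have B := K1 z h1 h2.
apply: lerD; apply: ler_wpM2l => //; lra.
Qed.

Lemma F_hom y t : 0 < t -> F (t *: y) = t * F y.
Proof.
move=> t0; apply/eqP; rewrite eq_le; apply/andP; split.
  have [g [ga [h1 h2 <-]]] := K2 (t *: y).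
  by rewrite dotpZr ler_pM2l // (K1 y h1 h2).
have [g [ga [h1 h2 <-]]] := K2 y.
by rewrite -dotpZr (K1 _ h1 h2).
Qed.

Definition Q (y : 'rV[R]_m) := enorm y ^+ 2 - dotp d y ^+ 2.
Definition G (y : 'rV[R]_m) :=
  Num.sqrt ((enorm y ^+ 2 - dotp d y ^+ 2) * (1 - al ^+ 2)) - dotp d y * al.

Lemma Q_ge0 y : 0 <= Q y.
Proof. by rewrite /Q enorm_sq subr_ge0 de2. Qed.

Lemma G_eq y : G y = be * Num.sqrt (Q y) - al * dotp d y.
Proof. by rewrite /G sqrtrM ?Q_ge0 // mulrC [dotp d y * _]mulrC. Qed.

Lemma G_le_r y : G y <= enorm y.
Proof.
rewrite G_eq; apply: sq_le; first exact: enorm_ge0.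
have := sqr_ge0 (be * dotp d y + al * Num.sqrt (Q y)).
have q2 : Num.sqrt (Q y) ^+ 2 = Q y by rewrite sqr_sqrtr // Q_ge0.
move: q2; rewrite /Q => q2.
have := be2.
nra.
Qed.

Lemma F_ge_G y : G y <= F y.
Proof.
rewrite /F; case: ifP => _; first exact: G_le_r.
by [].
Qed.

Lemma F_le_r y : F y <= enorm y.
Proof.
rewrite /F; case: ifP => _; first exact: lexx.
exact: G_le_r.
Qed.

Lemma diff_Q y : differentiable Q y.
Proof.
have -> : Q = (fun z => dotp z z) - (fun z => dotp d z) * (fun z => dotp d z).
  by apply/funext => z; rewrite /Q enorm_sq !fctE expr2.
apply: differentiableB; first exact: diff_dotself.
by apply: differentiableM; exact: diff_dot.
Qed.

Lemma diff_G y : (0 < Q y \/ forall z, Q z = 0) -> differentiable G y.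
Proof.
case=> [Qp|Q0].
  have -> : G = (fun z => be * Num.sqrt (Q z)) - (fun z => dotp d z) * cst al.
    by rewrite funeqE => z; rewrite G_eq !fctE [al * _]mulrC.
  apply: differentiableB.
    have -> : (fun z => be * Num.sqrt (Q z)) = cst be * (fun z => Num.sqrt (Q z)) by [].
    apply: differentiableM; first exact: differentiable_cst.
    exact: diff_sqrt_comp (diff_Q y) Qp.
  by apply: differentiableM; [exact: diff_dot | exact: differentiable_cst].
have -> : G = - ((fun z => dotp d z) * cst al).
  by rewrite funeqE => z; rewrite G_eq Q0 sqrtr0 mulr0 sub0r !fctE [al * _]mulrC.
by apply: differentiableN; apply: differentiableM; [exact: diff_dot | exact: differentiable_cst].
Qed.

Lemma enorm_gt0 k (y : 'rV[R]_k) : y != 0 -> 0 < enorm y.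
Proof.
move=> y0; rewrite /enorm sqrtr_gt0 lt_neqAle dotp_ge0 andbT eq_sym.
by apply/eqP => /dotp_eq0 h; rewrite h eqxx in y0.
Qed.

Lemma de_bound y : - enorm y <= dotp d y <= enorm y.
Proof.
have := de2 y; rewrite -enorm_sq => h.
have := enorm_ge0 y.
by move=> r0; apply/andP; split; nra.
Qed.

Lemma DF (y0 : 'rV[R]_m) : y0 != 0 ->
  (~~ (al * enorm y0 + dotp d y0 <= 0) -> 0 < Q y0 \/ forall z, Q z = 0) ->
  differentiable F y0.
Proof.
move=> y0n hQ.
have r0 := enorm_gt0 y0n.
have [al1|al1] := eqVneq al 1.
  have -> : F = - (fun z => dotp d z).
    rewrite funeqE => z; rewrite /F al1 !fctE mul1r; case: ifP => h.
      by have /andP[h1 h2] := de_bound z; apply: aux1.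
    by rewrite expr1n subrr mulr0 sqrtr0 mulr1 sub0r.
  by apply: differentiableN; exact: diff_dot.
have [aln1|aln1] := eqVneq al (-1).
  have -> : F = @enorm R m.
    rewrite funeqE => z; rewrite /F aln1 mulN1r.
    have := de_bound z; case/andP => _ h.
    by rewrite ifT // addrC subr_le0.
  exact: diff_enorm.
have al2' : al ^+ 2 < 1.
  rewrite lt_neqAle al2 andbT; apply/negP => /eqP h.
  have : (al - 1) * (al + 1) = 0 by rewrite -subr_sqr h expr1n subrr.
  move/eqP; rewrite mulf_eq0 => /orP[|]; rewrite ?subr_eq0 ?addr_eq0.
    by rewrite (negbTE al1).
  by rewrite (negbTE aln1).
have bep : 0 < be by rewrite /be sqrtr_gt0 subr_gt0.
set u := fun z => al * enorm z + dotp d z.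
have du : differentiable u y0.
  apply: differentiableD; last exact: diff_dot.
  have -> : (fun z => al * enorm z) = cst al * @enorm R m by [].
  by apply: differentiableM; [exact: differentiable_cst | exact: diff_enorm].
have cu := differentiable_continuous du.
case: (ltgtP (u y0) 0) => hu.
- apply: (diff_near (diff_enorm y0n)).
  have H : \forall t \near y0, u t < 0 := @cvgr_lt R _ _ (nbhs_filter y0) u (u y0) cu 0 hu.
  move: H; apply: filterS => z hz.
  by rewrite /F ifT // ltW.
- apply: (diff_near (diff_G (hQ _))); last first.
    have H : \forall t \near y0, 0 < u t := @cvgr_gt R _ _ (nbhs_filter y0) u (u y0) cu 0 hu.
    move: H; apply: filterS => z hz.
    by rewrite /F ifF // /G; apply/negbTE; rewrite -ltNge.
  by rewrite -ltNge.
have de0 : dotp d y0 = - (al * enorm y0) by move: hu; rewrite /u => /eqP; rewrite addrC addr_eq0 => /eqP.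
have Qy0 : Q y0 = (be * enorm y0) ^+ 2 by rewrite /Q de0 sqrrN !exprMn be2; ring.
have Fy0 : F y0 = enorm y0 by rewrite /F ifT // -/(u y0) hu.
apply: (diff_squeeze (diff_G _) (diff_enorm y0n)).
- left; rewrite Qy0 exprn_gt0 // mulr_gt0 //.
- rewrite Fy0 G_eq Qy0 sqrtr_sqr ger0_norm ?mulr_ge0 ?ltW // de0.
  have := be2; move=> hb; rewrite mulrN opprK mulrA -expr2 hb mulrA -expr2; ring.
- by [].
apply: (@nearW _ _ _ (nbhs_filter y0)) => z; rewrite F_ge_G F_le_r.
by [].
Qed.

Lemma main_all :
  (forall y : 'rV[R]_m,
     (exists x, feasible a d y x /\ dotp lam x = phi lam a d y) /\
     (forall x, feasible a d y x -> dotp lam x <= phi lam a d y) /\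
     phi lam a d y =
       (if dotp lam a * enorm y + dotp d y <= 0 then enorm y
        else Num.sqrt ((enorm y ^+ 2 - (dotp d y) ^+ 2) * (1 - (dotp lam a) ^+ 2))
             - dotp d y * dotp lam a)) /\
  (forall (y z : 'rV[R]_m) (t : R), 0 <= t -> t <= 1 ->
     phi lam a d (t *: y + (1 - t) *: z)
       <= t * phi lam a d y + (1 - t) * phi lam a d z) /\
  (forall (y : 'rV[R]_m) (t : R), 0 < t -> phi lam a d (t *: y) = t * phi lam a d y) /\
  (if (enorm d == 1) && (1 < m)%N then
     forall y : 'rV[R]_m, ~ (exists t : R, 0 <= t /\ y = t *: d) ->
       differentiable (phi lam a d) y
   else
     forall y : 'rV[R]_m, y != 0 -> differentiable (phi lam a d) y).
Proof.
have PF : phi lam a d = F by rewrite funeqE => y; exact: phiF.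
rewrite PF; split.
  move=> y; split.
    by have [x [fx lx]] := P2 y; exists x.
  by split; [exact: P1 | by []].
split; first by move=> y z t t0 t1; exact: F_convex.
split; first by move=> y t t0; exact: F_hom.
have rr : enorm d == 1 -> rho2 = 1.
  by move=> /eqP h; rewrite /rho2 -enorm_sq h expr1n.
case: ifP => [/andP[hd1 hm]|hm].
  move=> y hy.
  have yn : y != 0.
    by apply/eqP => y0; apply: hy; exists 0; rewrite scale0r y0.
  apply: DF => // hreg; left.
  rewrite lt_neqAle Q_ge0 andbT; apply/negP => /eqP Q0.
  apply: hy; exists (dotp d y).
  have Q0' : enorm y ^+ 2 = dotp d y ^+ 2 by move: Q0; rewrite /Q => /eqP; rewrite eq_sym subr_eq0 => /eqP.
  split.
    apply: (aux2 (r:=enorm y) (al:=al)) => //.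
    - exact: enorm_ge0.
    - exact: al2.
    - by rewrite ltNge.
  apply/eqP; rewrite -subr_eq0; apply/eqP; apply: dotp_eq0.
  rewrite !(dotpBl, dotpBr, dotpZl, dotpZr) -/rho2 (rr hd1) (dotpC y d) -enorm_sq Q0'; ring.
move=> y yn; apply: DF => // hreg.
have [hd1|hd1] := boolP (enorm d == 1).
  right => z; rewrite /Q enorm_sq (@Q1 _ m d z) ?subrr //; last exact: rr.
  move: hm; rewrite hd1 /= => /negbT; rewrite -leqNgt => hm.
  case: m d y yn z hm {PF hreg rr} => [|[|m']] //.
  by move=> d0 y0 /eqP; rewrite (rV0_eq0 y0).
left.
have rl : rho2 < 1.
  rewrite /rho2 -enorm_sq; have := enorm_ge0 d; move: hd hd1.
  rewrite le_eqVlt => /orP[/eqP -> | h]; first by rewrite eqxx.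
  by move=> _ h0; rewrite expr_lt1.
have Y0 : 0 < dotp y y by rewrite -enorm_sq exprn_gt0 // enorm_gt0.
rewrite /Q enorm_sq.
have := CS d y; rewrite -/rho2 => h.
have : 0 < dotp y y * (1 - rho2) by rewrite mulr_gt0 // subr_gt0.
nra.
Qed.
End Main.

Unset Implicit Arguments.
Theorem proposition5 (R : realType) (n m : nat) (lam a : 'rV[R]_n) (d : 'rV[R]_m) :
  enorm lam = 1 -> enorm a = 1 -> enorm d <= 1 ->
  (* the maximum is attained and given by the closed formula *)
  (forall y : 'rV[R]_m,
     (exists x, feasible a d y x /\ dotp lam x = phi lam a d y) /\
     (forall x, feasible a d y x -> dotp lam x <= phi lam a d y) /\
     phi lam a d y =
       (if dotp lam a * enorm y + dotp d y <= 0 then enorm y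
        else Num.sqrt ((enorm y ^+ 2 - (dotp d y) ^+ 2) * (1 - (dotp lam a) ^+ 2))
             - dotp d y * dotp lam a)) /\
  (* convexity *)
  (forall (y z : 'rV[R]_m) (t : R), 0 <= t -> t <= 1 ->
     phi lam a d (t *: y + (1 - t) *: z)
       <= t * phi lam a d y + (1 - t) * phi lam a d z) /\
  (* positive homogeneity *)
  (forall (y : 'rV[R]_m) (t : R), 0 < t -> phi lam a d (t *: y) = t * phi lam a d y) /\
  (* differentiability *)
  (if (enorm d == 1) && (1 < m)%N then
     forall y : 'rV[R]_m, ~ (exists t : R, 0 <= t /\ y = t *: d) ->
       differentiable (phi lam a d) y
   else
     forall y : 'rV[R]_m, y != 0 -> differentiable (phi lam a d) y).
Proof. by move=> hl ha hd; exact: main_all. Qed.
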